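(* Let $\rho^{ab}$ be a state on $\mathcal H_a\otimes\mathcal H_b$, $\{|i\rangle\}_{i=1}^n$ an orthonormal basis of $\mathcal H_a$, $\eta_i=\mathrm{Tr}[(|i\rangle\langle i|\otimes I^b)\rho^{ab}]$ and (for $\eta_i>0$) $\omega_i=\eta_i^{-1}\sqrt{\rho^{ab}}(|i\rangle\langle i|\otimes I^b)\sqrt{\rho^{ab}}$. Then $$C^a_A(\rho^{ab})=P^{lsm}_E(\{\omega_i,\eta_i\}_{i=1}^n).$$
   Context: $C^a_A(\rho^{ab})=\min_{\sigma}(1-A^2(\rho^{ab},\sigma))$ over partial incoherent states $\sigma=\sum_ip_i|i\rangle\langle i|\otimes\sigma_i$, with $A(\rho,\sigma)=\mathrm{Tr}(\sqrt\rho\sqrt\sigma)$. For an ensemble $\{\rho_i,\eta_i\}$, let $\rho_{out}=\sum_i\eta_i\rho_i$ and $\rho_{out}^{-1/2}=\sum_k\lambda_k^{-1/2}P_k$ for the spectral decomposition $\rho_{out}=\sum_k\lambda_kP_k$ (sum over $\lambda_k>0$). The least square measurement (LSM) is $M^{lsm}_i=\eta_i\rho_{out}^{-1/2}\rho_i\rho_{out}^{-1/2}$, and its error probability is $P^{lsm}_E(\{\rho_i,\eta_i\})=1-\sum_i\eta_i\mathrm{Tr}(M^{lsm}_i\rho_i)$. *)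

(* Defs.v *)
(* Finite-dimensional quantum states as complex matrices over
   an arbitrary numClosedFieldType C (e.g. algC), using mathcomp's spectral
   theorem (spectral.v) for the functional calculus. *)
From HB Require Import structures.
From mathcomp Require Import all_boot all_order all_algebra.
Set Implicit Arguments. Unset Strict Implicit. Unset Printing Implicit Defensive.
Import Order.TTheory GRing.Theory Num.Theory Num.Def.
Local Open Scope ring_scope.

Section QDefs.
Variable C : numClosedFieldType.

Definition adjmx (p q : nat) (M : 'M[C]_(p, q)) : 'M[C]_(q, p) := map_mx conjC M^T.

Definition psdmx (p : nat) (A : 'M[C]_p) : Prop :=
  adjmx A = A /\ forall v : 'cV[C]_p, 0 <= (adjmx v *m A *m v) 0 0.

Definition statemx (p : nat) (A : 'M[C]_p) : Prop := psdmx A /\ \tr A = 1.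

(* functional calculus via the spectral decomposition A = P^-1 diag(d) P
   (P unitary), valid for normal (in particular hermitian) A *)
Definition mxfun (f : C -> C) (p : nat) (A : 'M[C]_p) : 'M[C]_p :=
  invmx (spectralmx A) *m diag_mx (map_mx f (spectral_diag A)) *m spectralmx A.

Definition sqrtmx (p : nat) (A : 'M[C]_p) : 'M[C]_p := mxfun (fun x : C => sqrtC x) A.

(* A^{-1/2} = sum_{lambda_k > 0} lambda_k^{-1/2} P_k  (generalized inverse) *)
Definition invsqrtmx (p : nat) (A : 'M[C]_p) : 'M[C]_p :=
  mxfun (fun x => if 0 < x then (sqrtC x)^-1 else 0) A.

(* Kronecker (tensor) product; index mxvec_index i j of 'I_(n*m) ~ |i>|j> *)
Definition kronmx (n m : nat) (A : 'M[C]_n) (B : 'M[C]_m) : 'M[C]_(n * m) :=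
  \matrix_(k < n * m, l < n * m)
    let ij := enum_val (cast_ord (esym (mxvec_cast n m)) k) in
    let ij' := enum_val (cast_ord (esym (mxvec_cast n m)) l) in
    A ij.1 ij'.1 * B ij.2 ij'.2.

Definition affinity (p : nat) (rho sigma : 'M[C]_p) : C :=
  \tr (sqrtmx rho *m sqrtmx sigma).

(* |i><i| for the orthonormal basis given by the columns of a unitary U *)
Definition basis_proj (n : nat) (U : 'M[C]_n) (i : 'I_n) : 'M[C]_n :=
  col i U *m adjmx (col i U).

Definition partial_incoherent (n m : nat) (U : 'M[C]_n) (sigma : 'M[C]_(n * m))
  : Prop :=
  exists (pr : 'I_n -> C) (sig : 'I_n -> 'M[C]_m),
    (forall i, 0 <= pr i) /\ \sum_i pr i = 1 /\ (forall i, statemx (sig i)) /\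
    sigma = \sum_i pr i *: kronmx (basis_proj U i) (sig i).

(* "C^a_A(rho) = c": c is the minimum of 1 - A^2(rho, sigma) over partial
   incoherent sigma (attained, and a lower bound). *)
Definition cohA_is (n m : nat) (U : 'M[C]_n) (rho : 'M[C]_(n * m)) (c : C)
  : Prop :=
  (exists sigma, @partial_incoherent n m U sigma /\ c = 1 - (affinity rho sigma) ^+ 2)
  /\ (forall sigma, @partial_incoherent n m U sigma ->
        c <= 1 - (affinity rho sigma) ^+ 2).

Definition lsm_error (k p : nat) (rhos : 'I_k -> 'M[C]_p) (etas : 'I_k -> C) : C :=
  let rho_out := \sum_i etas i *: rhos i in
  let R := invsqrtmx rho_out in
  let M := fun i => etas i *: (R *m rhos i *m R) in
  1 - \sum_i etas i * \tr (M i *m rhos i).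

Definition eta_of (n m : nat) (U : 'M[C]_n) (rho : 'M[C]_(n * m)) (i : 'I_n) : C :=
  \tr (kronmx (basis_proj U i) (1%:M : 'M[C]_m) *m rho).

(* omega_i = eta_i^-1 sqrt(rho) (|i><i| (x) I) sqrt(rho)  (= 0 when eta_i = 0,
   in which case it carries zero weight) *)
Definition omega_of (n m : nat) (U : 'M[C]_n) (rho : 'M[C]_(n * m)) (i : 'I_n)
  : 'M[C]_(n * m) :=
  (@eta_of n m U rho i)^-1 *:
    (sqrtmx rho *m kronmx (basis_proj U i) (1%:M : 'M[C]_m) *m sqrtmx rho).

End QDefs.

Arguments partial_incoherent {C n} m U sigma.
Arguments cohA_is {C n} m U rho c.
Arguments eta_of {C n} m U rho i.
Arguments omega_of {C n} m U rho i.

(* Main.v *)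
Require Import Defs.
From HB Require Import structures.
From mathcomp Require Import all_boot all_order all_algebra.
From mathcomp Require Import ring.
Set Implicit Arguments. Unset Strict Implicit. Unset Printing Implicit Defensive.
Import Order.TTheory GRing.Theory Num.Theory Num.Def.
Local Open Scope ring_scope.

Section Q.
Variable C : numClosedFieldType.
Implicit Types (p q r : nat).

Lemma adjmxM p q r (A : 'M[C]_(p, q)) (B : 'M[C]_(q, r)) :
  adjmx (A *m B) = adjmx B *m adjmx A.
Proof. by rewrite /adjmx trmx_mul map_mxM. Qed.

Lemma adjmxK p q (A : 'M[C]_(p, q)) : adjmx (adjmx A) = A.
Proof. exact: trmxCK. Qed.

Lemma adjmxD p q (A B : 'M[C]_(p, q)) : adjmx (A + B) = adjmx A + adjmx B.
Proof. by rewrite /adjmx linearD /= map_mxD. Qed.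

Lemma adjmxN p q (A : 'M[C]_(p, q)) : adjmx (- A) = - adjmx A.
Proof. by rewrite /adjmx linearN /= map_mxN. Qed.

Lemma adjmxZ p q c (A : 'M[C]_(p, q)) : adjmx (c *: A) = c^* *: adjmx A.
Proof. by rewrite /adjmx linearZ /= map_mxZ. Qed.

Lemma adjmx_sum p q (I : finType) (F : I -> 'M[C]_(p, q)) :
  adjmx (\sum_i F i) = \sum_i adjmx (F i).
Proof.
apply/matrixP => a b; rewrite !mxE !summxE rmorph_sum; apply: eq_bigr => i _.
by rewrite !mxE.
Qed.

Lemma adjmx1 p : adjmx (1%:M : 'M[C]_p) = 1%:M.
Proof. by rewrite /adjmx trmx1 map_mx1. Qed.

Lemma adjmx0 p q : adjmx (0 : 'M[C]_(p, q)) = 0.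
Proof. by rewrite /adjmx trmx0 map_mx0. Qed.

Lemma tr_adjmx p (A : 'M[C]_p) : \tr (adjmx A) = (\tr A)^*.
Proof.
rewrite /mxtrace rmorph_sum; apply: eq_bigr => i _; by rewrite !mxE.
Qed.

Lemma frobE p q (A : 'M[C]_(p, q)) :
  \tr (adjmx A *m A) = \sum_i \sum_j (A j i)^* * A j i.
Proof. by apply: eq_bigr => i _; rewrite mxE; apply: eq_bigr => j _; rewrite !mxE. Qed.

Lemma frob_ge0 p q (A : 'M[C]_(p, q)) : 0 <= \tr (adjmx A *m A).
Proof.
rewrite frobE; apply: sumr_ge0 => i _; apply: sumr_ge0 => j _.
by rewrite mulrC mul_conjC_ge0.
Qed.

Lemma frob_eq0 p q (A : 'M[C]_(p, q)) : \tr (adjmx A *m A) = 0 -> A = 0.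
Proof.
rewrite frobE => /eqP; rewrite psumr_eq0 => [/allP H|i _]; last first.
  by apply: sumr_ge0 => j _; rewrite mulrC mul_conjC_ge0.
apply/matrixP => j i; rewrite mxE; have /implyP := H i (mem_index_enum _).
move=> /(_ isT); rewrite psumr_eq0 => [/allP H2|k _]; last by rewrite mulrC mul_conjC_ge0.
by have /implyP/(_ isT) := H2 j (mem_index_enum _); rewrite mulrC mul_conjC_eq0 => /eqP.
Qed.

Definition herm p (A : 'M[C]_p) := adjmx A = A.

Lemma psd_herm p (A : 'M[C]_p) : psdmx A -> herm A.
Proof. by case. Qed.

Lemma psd_gram p q (B : 'M[C]_(p, q)) : psdmx (adjmx B *m B).
Proof.
split; first by rewrite adjmxM adjmxK.
move=> v; rewrite !mulmxA -adjmxM -mulmxA.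
have -> : forall w : 'M[C]_(1,1), w 0 0 = \tr w by move=> w; rewrite /mxtrace big_ord1.
exact: frob_ge0.
Qed.

Lemma psd_sandwich p q (B : 'M[C]_(p, q)) (M : 'M[C]_q) :
  psdmx M -> psdmx (B *m M *m adjmx B).
Proof.
case=> hM pM; split; first by rewrite !adjmxM adjmxK hM mulmxA.
move=> v; have := pM (adjmx B *m v).
by rewrite adjmxM adjmxK !mulmxA.
Qed.

Lemma psd_add p (A B : 'M[C]_p) : psdmx A -> psdmx B -> psdmx (A + B).
Proof.
case=> hA pA [hB pB]; split; first by rewrite adjmxD hA hB.
move=> v; rewrite mulmxDr mulmxDl mxE; exact: addr_ge0.
Qed.

Lemma psd_scale p c (A : 'M[C]_p) : 0 <= c -> psdmx A -> psdmx (c *: A).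
Proof.
move=> c0 [hA pA]; split; first by rewrite adjmxZ hA geC0_conj.
move=> v; rewrite -scalemxAr -scalemxAl mxE; exact: mulr_ge0.
Qed.

Lemma psd0 p : psdmx (0 : 'M[C]_p).
Proof. by split; [rewrite adjmx0|move=> v; rewrite mulmx0 mul0mx mxE]. Qed.

Lemma psd_sum p (I : finType) (F : I -> 'M[C]_p) :
  (forall i, psdmx (F i)) -> psdmx (\sum_i F i).
Proof.
move=> H; apply: (big_ind (@psdmx C p)) => //; [exact: psd0 | exact: psd_add].
Qed.


Lemma herm_hermsym p (A : 'M[C]_p) : herm A -> A \is hermsymmx.
Proof. by move=> hA; apply/is_hermitianmxP; rewrite expr0 scale1r. Qed.

Lemma unitary_adjK p (W : 'M[C]_p) : W \is unitarymx -> W *m adjmx W = 1%:M.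
Proof. by move/unitarymxP. Qed.

Lemma unitary_adjKV p (W : 'M[C]_p) : W \is unitarymx -> adjmx W *m W = 1%:M.
Proof. by move/unitarymxP/mulmx1C. Qed.

Lemma mxfunE f p (A : 'M[C]_p) :
  mxfun f A = adjmx (spectralmx A) *m diag_mx (map_mx f (spectral_diag A)) *m spectralmx A.
Proof. by rewrite /mxfun invmx_unitary ?spectral_unitarymx. Qed.

Lemma specE p (A : 'M[C]_p) : herm A ->
  A = adjmx (spectralmx A) *m diag_mx (spectral_diag A) *m spectralmx A.
Proof.
move=> hA; have /hermitian_normalmx/orthomx_spectralP E := herm_hermsym hA.
by rewrite {1}E invmx_unitary ?spectral_unitarymx.
Qed.

Lemma diag_mul p (a b : 'rV[C]_p) :
  diag_mx a *m diag_mx b = diag_mx (\row_k (a 0 k * b 0 k)).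
Proof.
apply/matrixP => i j; rewrite mul_diag_mx !mxE.
by case: (eqVneq i j) => [->|]; rewrite ?mulr1n ?mulr0n ?mulr0.
Qed.

Lemma conj_mul p (W : 'M[C]_p) (D1 D2 : 'M[C]_p) : W \is unitarymx ->
  (adjmx W *m D1 *m W) *m (adjmx W *m D2 *m W) = adjmx W *m (D1 *m D2) *m W.
Proof.
move=> uW; rewrite -!mulmxA; congr (_ *m _); rewrite !mulmxA.
by rewrite -(mulmxA _ W) unitary_adjK // mulmx1.
Qed.

Lemma mxfunM f g p (A : 'M[C]_p) :
  mxfun f A *m mxfun g A = mxfun (fun x => f x * g x) A.
Proof.
rewrite !mxfunE conj_mul ?spectral_unitarymx // diag_mul.
congr (_ *m _ *m _); congr diag_mx.
by apply/matrixP => i j; rewrite !mxE [i]ord1.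
Qed.

Lemma mxfun_eq f g p (A : 'M[C]_p) :
  (forall k, f (spectral_diag A 0 k) = g (spectral_diag A 0 k)) -> mxfun f A = mxfun g A.
Proof.
move=> H; rewrite !mxfunE; congr (_ *m _ *m _); congr diag_mx.
by apply/matrixP => i j; rewrite !mxE [i]ord1 H.
Qed.

Lemma mxfun_id p (A : 'M[C]_p) : herm A -> mxfun id A = A.
Proof. by move=> hA; rewrite mxfunE map_mx_id // -specE. Qed.

Lemma adj_diag p (a : 'rV[C]_p) : adjmx (diag_mx a) = diag_mx (map_mx conjC a).
Proof. by rewrite /adjmx tr_diag_mx map_diag_mx. Qed.

Lemma mxfun_herm f p (A : 'M[C]_p) :
  (forall k, (f (spectral_diag A 0 k))^* = f (spectral_diag A 0 k)) -> herm (mxfun f A).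
Proof.
move=> H; rewrite /herm !mxfunE !adjmxM adjmxK mulmxA adj_diag; congr (_ *m _ *m _); congr diag_mx.
by apply/matrixP => i j; rewrite !mxE [i]ord1 H.
Qed.

Lemma spec_entry p (A : 'M[C]_p) (k : 'I_p) : herm A ->
  spectral_diag A 0 k = (adjmx (adjmx (row k (spectralmx A))) *m A *m adjmx (row k (spectralmx A))) 0 0.
Proof.
move=> hA; set V := spectralmx A.
have uV : V \is unitarymx by apply: spectral_unitarymx.
have -> : spectral_diag A 0 k = (V *m A *m adjmx V) k k.
  rewrite {2}(specE hA) -/V !mulmxA unitary_adjK // mul1mx -mulmxA unitary_adjK //.
  by rewrite mulmx1 mxE eqxx mulr1n.
rewrite adjmxK !mxE; apply: eq_bigr => j _; rewrite !mxE; congr (_ * _).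
by apply: eq_bigr => a _; rewrite !mxE.
Qed.

Lemma psd_eig p (A : 'M[C]_p) (k : 'I_p) : psdmx A -> 0 <= spectral_diag A 0 k.
Proof. by case=> hA pA; rewrite spec_entry //; apply: pA. Qed.

Lemma psd_diag p (c : 'rV[C]_p) : (forall k, 0 <= c 0 k) -> psdmx (diag_mx c).
Proof.
move=> H; split.
  rewrite adj_diag; congr diag_mx; apply/matrixP => i j; rewrite !mxE [i]ord1 geC0_conj //.
move=> v; rewrite mul_mx_diag !mxE; apply: sumr_ge0 => j _; rewrite !mxE.
by rewrite mulrAC mulr_ge0 // mulrC mul_conjC_ge0.
Qed.

Lemma psd_mxfun f p (A : 'M[C]_p) :
  (forall k, 0 <= f (spectral_diag A 0 k)) -> psdmx (mxfun f A).
Proof.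
move=> H; rewrite mxfunE -{2}(adjmxK (spectralmx A)); apply: psd_sandwich.
by apply: psd_diag => k; rewrite mxE.
Qed.

Lemma psd_sqrt p (A : 'M[C]_p) : psdmx A -> psdmx (sqrtmx A).
Proof. by move=> pA; apply: psd_mxfun => k; rewrite sqrtC_ge0 psd_eig. Qed.

Lemma sqrt_sqr p (A : 'M[C]_p) : psdmx A -> sqrtmx A *m sqrtmx A = A.
Proof.
move=> pA; rewrite /sqrtmx mxfunM -{2}(mxfun_id (psd_herm pA)).
by apply: mxfun_eq => k; rewrite -expr2 sqrtCK.
Qed.

Lemma sqrt_invsqrt p (A : 'M[C]_p) : psdmx A ->
  sqrtmx A *m invsqrtmx A *m sqrtmx A = sqrtmx A.
Proof.
move=> pA; rewrite /sqrtmx /invsqrtmx !mxfunM; apply: mxfun_eq => k.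
have := psd_eig k pA; set x := spectral_diag A 0 k => x0.
case: ifP => [xp|]; first by rewrite mulfV ?mul1r // sqrtC_eq0 gt_eqF.
by rewrite lt_def x0 andbT => /negbFE/eqP->; rewrite sqrtC0 !mul0r.
Qed.

Lemma intertwine p (Q : 'M[C]_p) (a b a' b' : 'rV[C]_p) :
  diag_mx a *m Q = Q *m diag_mx b ->
  (forall j k, a 0 j = b 0 k -> a' 0 j = b' 0 k) ->
  diag_mx a' *m Q = Q *m diag_mx b'.
Proof.
move=> E H; apply/matrixP => j k; have /matrixP/(_ j k) := E.
rewrite !mul_diag_mx !mul_mx_diag !mxE.
have [->|nz] := eqVneq (Q j k) 0; first by rewrite !mulr0 !mul0r.
by rewrite mulrC => /(mulfI nz) /H ->; rewrite mulrC.
Qed.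

Lemma mxfun_comm f p (A M : 'M[C]_p) : herm A -> M *m A = A *m M ->
  M *m mxfun f A = mxfun f A *m M.
Proof.
move=> hA MA; set V := spectralmx A; set d := spectral_diag A.
have uV : V \is unitarymx by apply: spectral_unitarymx.
set Q := V *m M *m adjmx V.
have K : adjmx V *m V = 1%:M by apply: unitary_adjKV.
have DA : diag_mx d = V *m A *m adjmx V.
  by rewrite (specE hA) -/V -/d !mulmxA unitary_adjK // mul1mx -mulmxA unitary_adjK // mulmx1.
have E : diag_mx d *m Q = Q *m diag_mx d.
  rewrite DA /Q !mulmxA -(mulmxA (V *m A) (adjmx V) V) K mulmx1.
  rewrite -(mulmxA (V *m M) (adjmx V) V) K mulmx1.
  by rewrite -(mulmxA V A M) -MA mulmxA.
have E' : diag_mx (map_mx f d) *m Q = Q *m diag_mx (map_mx f d).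
  by apply: (intertwine E) => j k; rewrite !mxE => ->.
have -> : M = adjmx V *m Q *m V.
  by rewrite /Q !mulmxA K mul1mx -mulmxA K mulmx1.
rewrite mxfunE -/V -/d !conj_mul //; congr (_ *m _ *m _); by rewrite E'.
Qed.

Lemma sqrt_uniq p (Y : 'M[C]_p) : psdmx Y -> sqrtmx (Y *m Y) = Y.
Proof.
move=> pY; have hY := psd_herm pY.
set A := Y *m Y.
have hA : herm A by rewrite /herm /A adjmxM hY.
set V := spectralmx A; set d := spectral_diag A.
set W := spectralmx Y; set e := spectral_diag Y.
have uV : V \is unitarymx by apply: spectral_unitarymx.
have uW : W \is unitarymx by apply: spectral_unitarymx.
set Q := V *m adjmx W.
have DA : diag_mx d = V *m A *m adjmx V.
  by rewrite (specE hA) -/V -/d !mulmxA unitary_adjK // mul1mx -mulmxA unitary_adjK // mulmx1.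
have YE : Y = adjmx W *m diag_mx e *m W by rewrite (specE hY).
have E : diag_mx d *m Q = Q *m diag_mx (\row_k (e 0 k * e 0 k)).
  rewrite DA /Q /A {1 2}YE conj_mul // diag_mul.
  rewrite !mulmxA -(mulmxA _ (adjmx V) V) unitary_adjKV // mulmx1.
  by rewrite -!mulmxA unitary_adjK // mulmx1.
have E' : diag_mx (map_mx sqrtC d) *m Q = Q *m diag_mx e.
  apply: (intertwine E) => j k; rewrite !mxE => ->; rewrite -expr2 sqrCK //.
  by rewrite /e psd_eig.
rewrite /sqrtmx mxfunE -/V -/d.
have -> : V = Q *m W by rewrite /Q -mulmxA unitary_adjKV // mulmx1.
rewrite adjmxM mulmxA -(mulmxA (adjmx W *m adjmx Q)).
rewrite (_ : diag_mx (map_mx (fun x => sqrtC x) d) *m Q = Q *m diag_mx e); last exact: E'.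
have QQ : adjmx Q *m Q = 1%:M.
  by rewrite /Q adjmxM adjmxK !mulmxA -(mulmxA W) unitary_adjKV // mulmx1 unitary_adjK.
by rewrite mulmxA -(mulmxA (adjmx W)) QQ mulmx1 YE.
Qed.


Section Kron.
Variables n m : nat.

Definition ix (k : 'I_(n * m)) : 'I_n * 'I_m :=
  enum_val (cast_ord (esym (mxvec_cast n m)) k).
Definition xi (p : 'I_n * 'I_m) : 'I_(n * m) := cast_ord (mxvec_cast n m) (enum_rank p).

Lemma ixK : cancel ix xi.
Proof. by move=> k; rewrite /ix /xi enum_valK cast_ordKV. Qed.
Lemma xiK : cancel xi ix.
Proof. by move=> p; rewrite /ix /xi cast_ordK enum_rankK. Qed.

Lemma ix_inj : injective ix. Proof. exact: can_inj ixK. Qed.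

Lemma sum_ix (F : 'I_n -> 'I_m -> C) :
  \sum_(k < n * m) F (ix k).1 (ix k).2 = \sum_(a < n) \sum_(b < m) F a b.
Proof.
rewrite (reindex xi); last by exists ix => p _; rewrite ?xiK ?ixK.
by rewrite pair_big; apply: eq_bigr => -[a b] _; rewrite xiK.
Qed.

Lemma sum_delta p (F : 'I_p -> C) (c : 'I_p) :
  \sum_b ((c == b)%:R * F b) = F c.
Proof.
rewrite (bigD1 c) //= eqxx mul1r big1 ?addr0 // => b /negbTE.
by rewrite eq_sym => ->; rewrite mul0r.
Qed.

Lemma kronE (A : 'M[C]_n) (B : 'M[C]_m) k l :
  kronmx A B k l = A (ix k).1 (ix l).1 * B (ix k).2 (ix l).2.
Proof. by rewrite mxE. Qed.

Definition Kmx (u : 'cV[C]_n) : 'M[C]_(n * m, m) :=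
  \matrix_(k, b) (u (ix k).1 0 * ((ix k).2 == b)%:R).

Lemma kron_K (u : 'cV[C]_n) (B : 'M[C]_m) :
  kronmx (u *m adjmx u) B = Kmx u *m B *m adjmx (Kmx u).
Proof.
apply/matrixP => k l; rewrite kronE !mxE big_ord1 !mxE.
have -> : \sum_j ((Kmx u *m B) k j * (adjmx (Kmx u)) j l) =
   \sum_j (((ix l).2 == j)%:R * ((Kmx u *m B) k j * (u (ix l).1 0)^*)).
  apply: eq_bigr => j _; rewrite !mxE rmorphM /= [in RHS]mulrC -!mulrA; congr (_ * _).
  by rewrite rmorph_nat.
rewrite sum_delta mxE.
have -> : \sum_j (Kmx u k j * B j (ix l).2) = \sum_j (((ix k).2 == j)%:R * (u (ix k).1 0 * B j (ix l).2)).
  by apply: eq_bigr => j _; rewrite !mxE mulrCA mulrA [_ * _%:R]mulrC.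
by rewrite sum_delta mulrAC.
Qed.

Lemma KtK (u w : 'cV[C]_n) :
  adjmx (Kmx u) *m Kmx w = ((adjmx u *m w) 0 0) *: 1%:M.
Proof.
apply/matrixP => b b'; rewrite !mxE.
rewrite (eq_bigr (fun k => ((u (ix k).1 0)^* * w (ix k).1 0) * (((ix k).2 == b)%:R * ((ix k).2 == b')%:R))); last first.
  move=> k _; rewrite !mxE rmorphM /= rmorph_nat.
  by rewrite mulrACA.
rewrite (sum_ix (fun a c => ((u a 0)^* * w a 0) * ((c == b)%:R * (c == b')%:R))) /=.
rewrite mulr_suml; apply: eq_bigr => a _; rewrite !mxE.
rewrite -mulr_sumr; congr (_ * _).
by rewrite (eq_bigr (fun b0 => (b == b0)%:R * (b0 == b')%:R)) ?sum_delta // => b0 _; rewrite eq_sym.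
Qed.

Lemma sumK (U : 'M[C]_n) : U *m adjmx U = 1%:M ->
  \sum_i Kmx (col i U) *m adjmx (Kmx (col i U)) = 1%:M.
Proof.
move=> uU; apply/matrixP => k l; rewrite summxE.
have E : forall i, (Kmx (col i U) *m adjmx (Kmx (col i U))) k l =
   U (ix k).1 i * (U (ix l).1 i)^* * ((ix k).2 == (ix l).2)%:R.
  move=> i; rewrite mxE.
  rewrite (eq_bigr (fun b => ((ix k).2 == b)%:R * (U (ix k).1 i * (U (ix l).1 i)^* * ((ix l).2 == b)%:R))).
    by rewrite sum_delta eq_sym.
  move=> b _; rewrite !mxE rmorphM /= rmorph_nat.
  by rewrite mulrACA mulrCA.
rewrite (eq_bigr _ (fun i _ => E i)) -mulr_suml.
have -> : \sum_i U (ix k).1 i * (U (ix l).1 i)^* = (U *m adjmx U) (ix k).1 (ix l).1.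
  by rewrite mxE; apply: eq_bigr => i _; rewrite !mxE.
rewrite uU !mxE -natrM -(inj_eq ix_inj); congr (_%:R).
by case: (ix k) => a b; case: (ix l) => a' b'; rewrite xpair_eqE mulnb.
Qed.

End Kron.

Lemma tr_sum p (I : finType) (F : I -> 'M[C]_p) : \tr (\sum_i F i) = \sum_i \tr (F i).
Proof. exact: raddf_sum. Qed.

Lemma tr_PSPT p (P S T : 'M[C]_p) : P *m T = T *m P -> P *m P = P ->
  \tr (P *m S *m P *m T) = \tr (S *m T *m P).
Proof.
move=> PT PP; rewrite -!mulmxA mxtrace_mulC -!mulmxA.
by rewrite (mulmxA P T P) PT -mulmxA PP.
Qed.

Lemma trZ2 p (A B A' : 'M[C]_p) e :
  \tr (A *m (e *: B) *m A' *m (e *: B)) = e * e * \tr (A *m B *m A' *m B).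
Proof.
by rewrite -!scalemxAr -!scalemxAl ?scalerA !mxtraceZ ?mulrA.
Qed.

Lemma trcyc p (R S P : 'M[C]_p) :
  \tr (R *m (S *m P *m S) *m R *m (S *m P *m S)) =
  \tr ((S *m R *m S) *m P *m (S *m R *m S) *m P).
Proof. by rewrite !mulmxA mxtrace_mulC !mulmxA. Qed.

Lemma psd_tr0 p (A : 'M[C]_p) : psdmx A -> \tr A = 0 -> A = 0.
Proof.
move=> pA t0; have E := sqrt_sqr pA; have [hR _] := psd_sqrt pA.
have R0 : sqrtmx A = 0 by apply: frob_eq0; rewrite hR E.
by rewrite -E R0 mul0mx.
Qed.

Section Main.
Variables (n m : nat) (U : 'M[C]_n) (rho : 'M[C]_(n * m)).
Hypothesis uU : U \is unitarymx.
Hypothesis sr : statemx rho.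

Definition K i := Kmx m (col i U).
Definition P i := locked (K i *m adjmx (K i)).
Lemma PE i : P i = K i *m adjmx (K i). Proof. by rewrite /P -lock. Qed.

Lemma KK i j : adjmx (K i) *m K j = (i == j)%:R%:M.
Proof.
rewrite /K KtK scalemx1; congr (_%:M).
have -> : (adjmx (col i U) *m col j U) 0 0 = (adjmx U *m U) i j.
  by rewrite !mxE; apply: eq_bigr => a _; rewrite !mxE.
by rewrite unitary_adjKV // mxE.
Qed.

Lemma kronP i : kronmx (basis_proj U i) 1%:M = P i.
Proof. by rewrite /basis_proj kron_K mulmx1 PE. Qed.

Lemma kronKB i B : kronmx (basis_proj U i) B = K i *m B *m adjmx (K i).
Proof. by rewrite /basis_proj kron_K. Qed.

Lemma Psum : \sum_i P i = 1%:M.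
Proof. rewrite (eq_bigr _ (fun i _ => PE i)); by apply: sumK; apply: unitary_adjK. Qed.

Lemma P_herm i : adjmx (P i) = P i.
Proof. by rewrite !PE adjmxM adjmxK. Qed.

Lemma KtP i j : adjmx (K i) *m P j = (i == j)%:R *: adjmx (K j).
Proof. by rewrite !PE mulmxA KK mul_scalar_mx. Qed.

Lemma PK i j : P j *m K i = (i == j)%:R *: K j.
Proof. by rewrite !PE -mulmxA KK eq_sym mul_mx_scalar. Qed.

Lemma PP i : P i *m P i = P i.
Proof. by rewrite {1}PE -mulmxA KtP eqxx scale1r PE. Qed.

Lemma PPn i j : i != j -> P i *m P j = 0.
Proof. by move=> /negbTE ne; rewrite {1}PE -mulmxA KtP ne scale0r mulmx0. Qed.

Definition S : 'M[C]_(n * m) := locked (sqrtmx rho).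
Lemma SE : sqrtmx rho = S. Proof. by rewrite /S -lock. Qed.
Lemma pS : psdmx S. Proof. by rewrite -SE; apply: psd_sqrt; case: sr. Qed.
Lemma hS : adjmx S = S. Proof. by case: pS. Qed.
Lemma SS : S *m S = rho. Proof. by rewrite -SE; apply: sqrt_sqr; case: sr. Qed.

Definition Cm i := adjmx (K i) *m S *m K i.
Lemma pCm i : psdmx (Cm i).
Proof. by rewrite /Cm -{2}(adjmxK (K i)); apply: psd_sandwich; apply: pS. Qed.
Lemma hCm i : adjmx (Cm i) = Cm i. Proof. by case: (pCm i). Qed.

Definition g i := \tr (S *m P i *m S *m P i).
Definition G := \sum_i g i.

Lemma gC i : g i = \tr (adjmx (Cm i) *m Cm i).
Proof.
rewrite hCm /g /Cm !PE !mulmxA mxtrace_mulC !mulmxA.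
by rewrite -!mulmxA; congr (\tr (_ *m _)); rewrite !mulmxA.
Qed.

Lemma g_ge0 i : 0 <= g i. Proof. by rewrite gC frob_ge0. Qed.
Lemma G_ge0 : 0 <= G. Proof. by apply: sumr_ge0 => i _; apply: g_ge0. Qed.

Definition eta i := eta_of m U rho i.
Definition omega i := omega_of m U rho i.

Lemma etaE i : eta i = \tr (adjmx (adjmx (K i) *m S) *m (adjmx (K i) *m S)).
Proof.
rewrite /eta /eta_of kronP -SS adjmxM adjmxK hS mulmxA (mxtrace_mulC (P i *m S) S) !PE.
by rewrite !mulmxA.
Qed.

Lemma eta0 i : eta i = 0 -> S *m P i *m S = 0 /\ g i = 0.
Proof.
rewrite etaE => /frob_eq0 E; split.
  by rewrite !PE !mulmxA -(mulmxA _ _ S) E mulmx0.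
by rewrite /g !PE !mulmxA -(mulmxA (S *m K i)) E mulmx0 !mul0mx mxtrace0.
Qed.

Lemma eta_omega i : eta i *: omega i = S *m P i *m S.
Proof.
rewrite /omega /omega_of kronP -/(eta i) SE scalerA.
have [e0|enz] := eqVneq (eta i) 0; first by rewrite e0 mul0r scale0r; case: (eta0 e0).
by rewrite mulfV // scale1r.
Qed.

Lemma rho_out : \sum_i eta i *: omega i = rho.
Proof.
rewrite (eq_bigr _ (fun i _ => eta_omega i)) -mulmx_suml -mulmx_sumr Psum mulmx1.
by rewrite SS.
Qed.

Lemma lsm_val : lsm_error omega eta = 1 - G.
Proof.
rewrite /lsm_error /= rho_out; congr (_ - _); apply: eq_bigr => i _.
set R := invsqrtmx rho.
have SRS : S *m R *m S = S by rewrite -SE; apply: sqrt_invsqrt; case: sr.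
rewrite -scalemxAl mxtraceZ mulrA.
have -> : eta i * eta i * \tr (R *m omega i *m R *m omega i) =
          \tr (R *m (eta i *: omega i) *m R *m (eta i *: omega i)).
  by rewrite trZ2.
rewrite eta_omega.
by rewrite trcyc SRS /g.
Qed.


Definition X := \sum_i P i *m S *m P i.

Lemma hX : adjmx X = X.
Proof.
rewrite /X adjmx_sum; apply: eq_bigr => i _.
by rewrite !adjmxM P_herm hS mulmxA.
Qed.

Lemma PX i : P i *m X = P i *m S *m P i.
Proof.
rewrite /X mulmx_sumr (bigD1 i) //= big1 ?addr0 => [|j ne].
  by rewrite !mulmxA PP.
by rewrite !mulmxA PPn ?mul0mx // eq_sym.
Qed.

Lemma trXX : \tr (X *m X) = G.
Proof.
rewrite {1}/X mulmx_suml tr_sum; apply: eq_bigr => i _.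
rewrite -mulmxA PX /g !mulmxA mxtrace_mulC !mulmxA PP.
by rewrite -!mulmxA mxtrace_mulC !mulmxA.
Qed.

Lemma trSX : \tr (S *m X) = G.
Proof.
rewrite /X mulmx_sumr tr_sum; apply: eq_bigr => i _.
by rewrite /g !mulmxA.
Qed.

Lemma trZZ p (A T : 'M[C]_p) a :
  \tr ((A - a *: T) *m (A - a *: T)) =
  \tr (A *m A) - a * \tr (A *m T) - a * \tr (T *m A) + a * a * \tr (T *m T).
Proof.
rewrite mulmxBl !mulmxBr -!scalemxAl -!scalemxAr !linearB /= !mxtraceZ.
by ring.
Qed.

Lemma lower sigma : partial_incoherent m U sigma ->
  1 - G <= 1 - (affinity rho sigma) ^+ 2.
Proof.
case=> pr [sig [p0 [psum [sst ->]]]].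
set sg := \sum_i _.
have sgE : sg = \sum_i pr i *: (K i *m sig i *m adjmx (K i)).
  by apply: eq_bigr => i _; rewrite kronKB.
have psg : psdmx sg.
  rewrite sgE; apply: psd_sum => i; apply: psd_scale => //.
  by apply: psd_sandwich; case: (sst i).
have trsg : \tr sg = 1.
  rewrite sgE tr_sum -psum; apply: eq_bigr => i _.
  rewrite mxtraceZ mxtrace_mulC mulmxA KK eqxx mul1mx.
  by case: (sst i) => _ ->; rewrite mulr1.
have comm : forall j, P j *m sg = sg *m P j.
  move=> j; rewrite sgE mulmx_sumr mulmx_suml; apply: eq_bigr => i _.
  rewrite -scalemxAr -scalemxAl; congr (_ *: _).
  rewrite !mulmxA PK -(mulmxA (K i *m sig i) (adjmx (K i)) (P j)) KtP.
  have [<-|ne] := eqVneq i j; first by rewrite !scale1r.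
  by rewrite !scale0r !mul0mx !mulmx0.
set tau := sqrtmx sg.
have ptau : psdmx tau by apply: psd_sqrt.
have htau : adjmx tau = tau by case: ptau.
have tt : tau *m tau = sg by apply: sqrt_sqr.
have ctau : forall j, P j *m tau = tau *m P j.
  by move=> j; apply: mxfun_comm (comm j); case: psg.
rewrite /affinity SE -/tau.
set a := \tr (S *m tau).
have aX : \tr (X *m tau) = a.
  rewrite /X mulmx_suml tr_sum.
  rewrite (eq_bigr (fun i => \tr (S *m tau *m P i))); last first.
    by move=> i _; rewrite tr_PSPT ?ctau ?PP.
  by rewrite -tr_sum -mulmx_sumr Psum mulmx1.
have aC : a^* = a.
  rewrite -aX -tr_adjmx adjmxM htau hX mxtrace_mulC //.
have hZ : adjmx (X - a *: tau) = X - a *: tau.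
  by rewrite adjmxD adjmxN adjmxZ aC htau hX.
have := frob_ge0 (X - a *: tau); rewrite hZ trZZ trXX aX mxtrace_mulC aX tt trsg.
rewrite lerD2l lerN2 -subr_ge0 => H; apply: le_trans H _.
by rewrite le_eqVlt; apply/orP; left; apply/eqP; ring.
Qed.


Lemma XE : X = \sum_i K i *m Cm i *m adjmx (K i).
Proof. by apply: eq_bigr => i _; rewrite PE /Cm !mulmxA. Qed.

Lemma pX : psdmx X.
Proof. by rewrite XE; apply: psd_sum => i; apply: psd_sandwich; apply: pCm. Qed.

Lemma trX : \tr X = \tr S.
Proof.
rewrite /X tr_sum.
rewrite (eq_bigr (fun i => \tr (P i *m S))); last first.
  by move=> i _; rewrite mxtrace_mulC mulmxA PP.
by rewrite -tr_sum -mulmx_suml Psum mul1mx.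
Qed.

Lemma G_neq0 : G != 0.
Proof.
apply/eqP => G0.
have g0 : forall i, g i = 0.
  by move=> i; apply: (psumr_eq0P (fun i _ => g_ge0 i) G0).
have C0 : forall i, Cm i = 0 by move=> i; apply: frob_eq0; rewrite -gC.
have X0 : X = 0 by rewrite XE big1 // => i _; rewrite C0 mulmx0 mul0mx.
have S0 : S = 0 by apply: psd_tr0; [apply: pS | rewrite -trX X0 mxtrace0].
case: sr => _; rewrite -SS S0 mul0mx mxtrace0 => /eqP; by rewrite eq_sym oner_eq0.
Qed.

Definition Dm i := Cm i *m Cm i.

Lemma pDm i : psdmx (Dm i).
Proof. by rewrite /Dm -{1}hCm; apply: psd_gram. Qed.

Lemma trD i : \tr (Dm i) = g i.
Proof. by rewrite gC hCm. Qed.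

Lemma XXE : X *m X = \sum_i K i *m Dm i *m adjmx (K i).
Proof.
rewrite {1}/X mulmx_suml; apply: eq_bigr => i _.
by rewrite -mulmxA PX !PE /Dm /Cm !mulmxA.
Qed.

Lemma exist_opt : exists sigma, partial_incoherent m U sigma /\
  1 - G = 1 - (affinity rho sigma) ^+ 2.
Proof.
have [k0 _] : exists k : 'I_(n * m), true.
  case: (pickP (fun _ : 'I_(n * m) => true)) => [k _|none]; first by exists k.
  exfalso; case: sr => _; rewrite /mxtrace big_pred0 // => /eqP.
  by rewrite eq_sym oner_eq0.
set j0 := (ix k0).2.
set B := (delta_mx 0 j0 : 'M[C]_(1, m)).
set Dl := adjmx B *m B.
have sDl : statemx Dl.
  split; first by apply: psd_gram.
  have -> : Dl = delta_mx j0 j0.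
    rewrite /Dl (_ : adjmx B = delta_mx j0 0) ?mul_delta_mx //.
    by apply/matrixP => a b; rewrite !mxE rmorph_nat andbC.
  rewrite /mxtrace (bigD1 j0) //= big1 ?addr0 => [|i ne]; rewrite mxE ?eqxx //.
  by rewrite (negbTE ne).
have Gn := G_neq0.
set pr := fun i => g i / G.
set sig := fun i => if g i == 0 then Dl else (g i)^-1 *: Dm i.
set c := (sqrtC G)^-1.
set Y := c *: X.
have pY : psdmx Y by apply: psd_scale; [rewrite invr_ge0 sqrtC_ge0 G_ge0 | apply: pX].
have cc : c * c = G^-1 by rewrite /c -expr2 exprVn sqrtCK.
exists (Y *m Y); split.
  exists pr, sig; split; first by move=> i; apply: divr_ge0; [apply: g_ge0 | apply: G_ge0].
  split; first by rewrite -mulr_suml mulfV.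
  split.
    move=> i; rewrite /sig; case: eqP => // gi.
    split; first by apply: psd_scale; [rewrite invr_ge0 g_ge0 | apply: pDm].
    by rewrite mxtraceZ trD mulVf //; apply/eqP.
  rewrite /Y -scalemxAl -scalemxAr scalerA cc XXE scaler_sumr.
  apply: eq_bigr => i _; rewrite kronKB /pr /sig.
  case: eqP => gi.
    have D0 : Dm i = 0 by apply: psd_tr0; [apply: pDm | rewrite trD].
    by rewrite gi D0 mul0r scale0r mulmx0 mul0mx scaler0.
  rewrite -scalemxAr -scalemxAl scalerA; congr (_ *: _).
  by rewrite mulrAC mulfV ?mul1r //; apply/eqP.
rewrite /affinity SE sqrt_uniq // /Y -scalemxAr mxtraceZ trSX.
rewrite exprMn expr2 cc expr2; by field.
Qed.

End Main.

End Q.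

Theorem theorem6 (C : numClosedFieldType) (n m : nat) (U : 'M[C]_n)
  (rho : 'M[C]_(n * m)) :
  U \is unitarymx -> statemx rho ->
  cohA_is m U rho (lsm_error (omega_of m U rho) (eta_of m U rho)).
Proof.
move=> uU sr; have := lsm_val uU sr; rewrite /omega /eta => ->; split.
  have [s [ps e]] := exist_opt uU sr; by exists s.
by move=> s ps; apply: lower.
Qed.
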